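(* Let $D' \in \mathrm{Sym}_n(\mathbb{R}_{\geq 0})$ and let $D^A$ be the all pairs shortest path matrix of the complete weighted graph $K_n(D')$, i.e. $D^A_{ij}$ is the minimum total weight of a path from $i$ to $j$ in $K_n(D')$. Then the perturbation $P^A := D^A - D'$ is a sparsest possible decrease only metric repair solution for $D'$; that is, $P^A \preceq 0$, $D'+P^A$ is metric, and every $P \preceq 0$ with $D'+P$ metric satisfies $\|P^A\|_0 \leq \|P\|_0$. *)

(* Defs.v *)
From HB Require Import structures.
From mathcomp Require Import all_boot all_order all_algebra.
Set Implicit Arguments. Unset Strict Implicit. Unset Printing Implicit Defensive.
Import Order.TTheory GRing.Theory Num.Theory.
Local Open Scope ring_scope.

Definition sym_nonneg (R : realFieldType) (n : nat) (D : 'M[R]_n) : Prop :=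
  (forall i j, D i j = D j i) /\ (forall i j, 0 <= D i j).

(* A (semi)metric matrix: zero diagonal, symmetric, triangle inequality
   (nonnegativity follows). *)
Definition is_metric (R : realFieldType) (n : nat) (D : 'M[R]_n) : Prop :=
  [/\ forall i, D i i = 0,
      forall i j, D i j = D j i &
      forall i j k, D i k <= D i j + D j k].

Definition is_path (n : nat) (i j : 'I_n) (p : seq 'I_n) : bool :=
  uniq (i :: p) && (last i p == j).

Definition path_weight (R : realFieldType) (n : nat) (D : 'M[R]_n)
  (i : 'I_n) (p : seq 'I_n) : R :=
  \sum_(e <- zip (i :: p) p) D e.1 e.2.

Definition is_apsp (R : realFieldType) (n : nat) (D DA : 'M[R]_n) : Prop :=
  forall i j,
    (exists2 p, is_path i j p & path_weight D i p = DA i j) /\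
    (forall p, is_path i j p -> DA i j <= path_weight D i p).

Definition mx_nonpos (R : realFieldType) (n : nat) (P : 'M[R]_n) : Prop :=
  forall i j, P i j <= 0.

Definition norm0 (R : realFieldType) (n : nat) (P : 'M[R]_n) : nat :=
  #|[set ij : 'I_n * 'I_n | P ij.1 ij.2 != 0]|.

(* Main.v *)
Require Import Defs.
From HB Require Import structures.
From mathcomp Require Import all_boot all_order all_algebra.
Import Order.TTheory GRing.Theory Num.Theory.
Local Open Scope ring_scope.

Section Aux.
Variables (R : realFieldType) (n : nat) (D : 'M[R]_n).

Fixpoint pw (i : 'I_n) (p : seq 'I_n) : R :=
  match p with [::] => 0 | x :: p' => D i x + pw x p' end.

Lemma pwE i p : path_weight D i p = pw i p.
Proof.
elim: p i => [|x p IH] i; first by rewrite /path_weight /= big_nil.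
by rewrite /path_weight /= big_cons /= -IH.
Qed.

Lemma pw_cat i a c : pw i (a ++ c) = pw i a + pw (last i a) c.
Proof.
elim: a i => [|x a IH] i /=; first by rewrite add0r.
by rewrite IH addrA.
Qed.

Hypothesis Dnn : forall i j, 0 <= D i j.
Hypothesis Dsym : forall i j, D i j = D j i.

Lemma pw_ge0 i p : 0 <= pw i p.
Proof. elim: p i => [|x p IH] i //=; exact: addr_ge0. Qed.

Lemma shortcut i p : exists2 q, is_path i (last i p) q & pw i q <= pw i p.
Proof.
elim: p i => [|x p IH] i.
  by exists [::]; rewrite /is_path /= ?eqxx.
have [q /andP [uq lq] le] := IH x.
have [ex|nex] := eqVneq i x.
  subst x; exists q; rewrite /is_path ?uq ?lq //=.
  by apply: (le_trans le); rewrite lerDr.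
case: (boolP (i \in q)) => iq.
  have [a [b def]] : exists a b, q = a ++ i :: b.
    exists (take (index i q) q), (drop (index i q).+1 q).
    by rewrite -{1}(cat_take_drop (index i q) q) (drop_nth i) ?index_mem // nth_index.
  exists b.
    rewrite /is_path; apply/andP; split.
      by move: uq; rewrite def -cat_cons cat_uniq => /and3P [_ _].
    by move: lq; rewrite def last_cat /=.
  apply: (le_trans _ (le_trans le _)); last by rewrite /= lerDr.
  by rewrite def pw_cat /= addrA lerDr addr_ge0 ?pw_ge0.
exists (x :: q).
  rewrite /is_path /= lq andbT.
  move: uq => /= ->; by rewrite andbT inE negb_or nex iq.
by rewrite /= lerD2l.
Qed.

Lemma pw_rev i p : pw i p = pw (last i p) (rev (belast i p)).
Proof.
elim: p i => [|x p IH] i //=.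
rewrite IH rev_cons -cats1 pw_cat /= addr0 addrC; congr (_ + _).
have := lastI x p => /(congr1 rev); rewrite rev_rcons => E.
have : last (last x p) (rev (belast x p)) = last x (rev (x :: p)) by rewrite E.
by rewrite rev_cons last_rcons => ->; rewrite Dsym.
Qed.

End Aux.
Arguments pw {R n} D i p.
Arguments shortcut {R n D} Dnn i p.
Arguments pw_rev {R n D} Dsym i p.
Arguments pw_cat {R n} D i a c.
Arguments pw_ge0 {R n D} Dnn i p.

Theorem mainTheorem1 (R : realFieldType) (n : nat) (D' DA : 'M[R]_n) :
  sym_nonneg D' -> is_apsp D' DA ->
  let PA := DA - D' in
  [/\ mx_nonpos PA,
      is_metric (D' + PA) &
      forall P : 'M[R]_n, mx_nonpos P -> is_metric (D' + P) ->
        (norm0 PA <= norm0 P)%N].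
Proof.
move=> [Dsym Dnn] Ha PA.
have walk : forall i p, DA i (last i p) <= pw D' i p.
  move=> i p; have [q qp le] := shortcut Dnn i p.
  by apply: le_trans le; rewrite -pwE; apply: (proj2 (Ha _ _)).
have ex : forall i j, exists2 p, last i p = j & pw D' i p = DA i j.
  move=> i j; have [[p /andP [_ /eqP lp] w] _] := Ha i j.
  by exists p => //; rewrite -pwE.
have leD : forall i j, DA i j <= D' i j.
  by move=> i j; have := walk i [:: j]; rewrite /= addr0.
have E : forall i j, (D' + PA) i j = DA i j.
  by move=> i j; rewrite !mxE addrC subrK.
split.
- by move=> i j; rewrite !mxE subr_le0.
- split=> [i|i j|i j k]; rewrite ?E.
  + have [[p /andP [up /eqP lp] _] _] := Ha i i.
    case: p up lp => [|x p] up lp.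
      by apply/eqP; rewrite eq_le (walk i [::]) /=; have [q <- <-] := ex i i; apply: pw_ge0.
    move: up lp => /= /andP [+ _] lp. rewrite -lp; by rewrite mem_last.
  + have sy : forall i j, DA j i <= DA i j.
      move=> a b; have [p lp <-] := ex a b.
      rewrite (pw_rev Dsym) lp.
      have := walk b (rev (belast a p)).
      suff -> : last b (rev (belast a p)) = a by [].
      have := lastI a p => /(congr1 rev); rewrite rev_rcons lp => Er.
      by have := congr1 (last b) Er; rewrite /= rev_cons last_rcons => <-.
    by apply/eqP; rewrite eq_le !sy.
  + have [p lp <-] := ex i j; have [q lq <-] := ex j k.
    have := walk i (p ++ q); rewrite last_cat lp lq pw_cat lp //.
- move=> P Pn [M0 Msym Mtri].
  have Mle : forall i p, (D' + P) i (last i p) <= pw D' i p.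
    move=> i p; elim: p i => [|x p IH] i /=; first by rewrite M0.
    apply: (le_trans (Mtri i x _)); apply: lerD => //.
    by rewrite mxE gerDl.
  apply: subset_leq_card; apply/subsetP => -[i j]; rewrite !inE /=.
  apply: contraNN => /eqP P0; apply/eqP.
  have [p lp w] := ex i j.
  have := Mle i p; rewrite lp w mxE P0 addr0 => h.
  rewrite !mxE; apply/eqP; by rewrite subr_eq0 eq_le leD h.

Qed.
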